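(* Let $k\ge 3$, $m\ge 2$. Identify $\mathfrak a=\mathfrak{sl}(2,\mathbb R)\times\mathfrak{gl}(m,\mathbb R)$ with its image in $\mathfrak{gl}(V)=\mathfrak{gl}(V_k)\otimes\mathfrak{gl}(W)$, and consider the $\mathfrak a$-module $\mathfrak{gl}(V)/\mathfrak a$ (with the adjoint action). The space of $y$-invariant elements (elements annihilated by $y$) of $\mathfrak{gl}(V)/\mathfrak a$ is the direct sum of (the images of) the $\mathfrak{gl}(m,\mathbb R)$-modules \[ A_2=\mathbb R y\otimes\mathfrak{sl}(W),\qquad A_{i+1}=\mathbb R y^i\otimes\mathfrak{gl}(W),\quad i=2,\dots,k, \] where $y^i$ denotes the $i$-th power of the endomorphism $y$ of $V_k$. Moreover, for every $\phi\in A_i$ the cochain $c_\phi$ on $\mathfrak g_-=\mathbb R x\oplus V$ given by $c_\phi(x\wedge v)=\phi(v)$, $c_\phi(V\wedge V)=0$, has degree $i$.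
   Context: $x=\begin{pmatrix}0&0\\1&0\end{pmatrix}$, $y=\begin{pmatrix}0&1\\0&0\end{pmatrix}$, $h=\begin{pmatrix}-1&0\\0&1\end{pmatrix}$ in $\mathfrak{sl}(2,\mathbb R)$; $V_k=S^k(\mathbb R^2)$ with basis $v^i=f_2^{k-i}f_1^i/i!$ ($f_1,f_2$ the standard basis of $\mathbb R^2$); $W=\mathbb R^m$ the standard $\mathfrak{gl}(m,\mathbb R)$-module; $V=V_k\otimes W$ with the natural faithful action of $\mathfrak a$. $\mathfrak g=\mathfrak a\ltimes V$ ($V$ abelian ideal) is graded by $\mathfrak g_1=\mathbb R y$, $\mathfrak g_0=\mathbb R h\oplus\mathfrak{gl}(m,\mathbb R)$, $\mathfrak g_{-1}=\mathbb R x\oplus v^k\otimes W$, $\mathfrak g_{-i}=v^{k+1-i}\otimes W$ for $2\le i\le k+1$, and $\mathfrak g_-=\bigoplus_{i<0}\mathfrak g_i=\mathbb R x\oplus V$. A cochain $c\in\operatorname{Hom}(\wedge^2\mathfrak g_-,\mathfrak g)$ has degree $r$ if $c(\mathfrak g_i\wedge\mathfrak g_j)\subset\mathfrak g_{i+j+r}$ for all $i,j$. *)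

(* Defs.v *)
From HB Require Import structures.
From mathcomp Require Import all_boot all_order all_algebra.
From mathcomp Require Import mxtens.
From mathcomp Require Import reals.
Set Implicit Arguments. Unset Strict Implicit. Unset Printing Implicit Defensive.
Import Order.TTheory GRing.Theory Num.Theory.
Local Open Scope ring_scope.

Section Setup.
Variable R : realType.

Definition x2 : 'M[R]_2 := \matrix_(i, j) (if (i == 1) && (j == 0) then 1 else 0).
Definition y2 : 'M[R]_2 := \matrix_(i, j) (if (i == 0) && (j == 1) then 1 else 0).
Definition h2 : 'M[R]_2 :=
  \matrix_(i, j) (if i == j then (if i == 0 then -1 else 1) else 0).

Definition is_sl2 (X : 'M[R]_2) : Prop := \tr X = 0.

(* The natural action of gl(2,R) (as derivations) on V_k = S^k(R^2),
   written in the basis v^j = f2^(k-j) f1^j / j!, j = 0..k, acting on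
   column vectors: entry (i,j) is the v^i-coefficient of X . v^j.
   With X f1 = X00 f1 + X10 f2 and X f2 = X01 f1 + X11 f2 one gets
   X . v^j = (k-j)(j+1) X01 v^(j+1) + ((k-j) X11 + j X00) v^j + X10 v^(j-1). *)
Definition rhok (k : nat) (X : 'M[R]_2) : 'M[R]_k.+1 :=
  \matrix_(i, j)
    (if (i : nat) == j.+1 then ((k - j) * j.+1)%:R * X 0 1
     else if (i : nat) == j then (k - j)%:R * X 1 1 + j%:R * X 0 0
     else if (i : nat).+1 == j then X 1 0
     else 0).

Definition vk (k : nat) (j : 'I_k.+1) : 'cV[R]_k.+1 := delta_mx j 0.

(* V = V_k (x) W, W = R^m, as column vectors of size (k+1)*m;
   gl(V) = 'M_((k+1)*m), with gl(V_k) (x) gl(W) realised by the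
   Kronecker product [*t]. *)
Definition glV (k m : nat) := 'M[R]_(k.+1 * m).
Definition vecV (k m : nat) := 'cV[R]_(k.+1 * m).

Definition in_a (k m : nat) (T : glV k m) : Prop :=
  exists (X : 'M[R]_2) (B : 'M[R]_m),
    is_sl2 X /\ T = rhok k X *t (1%:M : 'M[R]_m) + (1%:M : 'M[R]_k.+1) *t B.

Definition brV (k m : nat) (S T : glV k m) : glV k m := S *m T - T *m S.

Definition yV (k m : nat) : glV k m := rhok k y2 *t (1%:M : 'M[R]_m).

(* T + a is annihilated by y in gl(V)/a  iff  [y, T] lies in a. *)
Definition y_invariant_mod_a (k m : nat) (T : glV k m) : Prop :=
  in_a (brV (yV k m) T).

Definition in_A (k m : nat) (j : nat) (T : glV k m) : Prop :=
  (j = 2%N /\ exists B : 'M[R]_m, \tr B = 0 /\ T = rhok k y2 *t B)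
  \/ ((3 <= j <= k.+1)%N /\
      exists B : 'M[R]_m, T = (rhok k y2 ^+ j.-1) *t B).

(* The graded Lie algebra g = a |x V; an element is a triple
   (X in sl(2), B in gl(m), v in V). *)
Definition gelt (k m : nat) := ('M[R]_2 * 'M[R]_m * vecV k m)%type.

Definition in_vW (k m : nat) (j : 'I_k.+1) (v : vecV k m) : Prop :=
  exists w : 'cV[R]_m, v = vk j *t w.

Definition in_g (k m : nat) (n : int) (z : gelt k m) : Prop :=
  let: (X, B, v) := z in
  if n == 1 then (exists t : R, X = t *: y2) /\ B = 0 /\ v = 0
  else if n == 0 then (exists t : R, X = t *: h2) /\ v = 0
  else if n == -1 then (exists t : R, X = t *: x2) /\ B = 0 /\ in_vW (@ord_max k) v
  else if (- (k.+1)%:Z <= n) && (n <= -2) then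
    X = 0 /\ B = 0 /\ exists j : 'I_k.+1, (j%:Z - (k.+1)%:Z = n) /\ in_vW j v
  else X = 0 /\ B = 0 /\ v = 0.

(* g_- = R x + V; an element (t, v) stands for t x + v. *)
Definition gminus (k m : nat) := (R * vecV k m)%type.
Definition emb_minus (k m : nat) (u : gminus k m) : gelt k m :=
  (u.1 *: x2, 0, u.2).

(* A cochain c in Hom(wedge^2 g_-, g), given as an (alternating, bilinear)
   function of two arguments, has degree r if c(g_i /\ g_j) in g_{i+j+r}. *)
Definition cochain_degree (k m : nat) (c : gminus k m -> gminus k m -> gelt k m)
    (r : int) : Prop :=
  forall (i j : int) (u w : gminus k m),
    in_g i (emb_minus u) -> in_g j (emb_minus w) -> in_g (i + j + r) (c u w).

(* The cochain c_phi: c_phi(x /\ v) = phi(v), c_phi(V /\ V) = 0, i.e.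
   c_phi(t x + v, t' x + v') = t phi(v') - t' phi(v). *)
Definition c_phi (k m : nat) (phi : glV k m) (u w : gminus k m) : gelt k m :=
  (0, 0, u.1 *: (phi *m w.2) - w.1 *: (phi *m u.2)).

End Setup.

(* Main.v *)
Require Import Defs.
From HB Require Import structures.
From mathcomp Require Import all_boot all_order all_algebra.
From mathcomp Require Import mxtens.
From mathcomp Require Import reals.
From mathcomp Require Import zify ring lra.
Set Implicit Arguments. Unset Strict Implicit. Unset Printing Implicit Defensive.
Import Order.TTheory GRing.Theory Num.Theory.
Local Open Scope ring_scope.

Section S1.
Variable R : realType.
Variable k : nat.
Local Notation Y := (rhok k (y2 R)).
Definition yc (j : nat) : R := ((k - j) * j.+1)%:R.

Lemma y2E i j : y2 R i j = if (i == 0) && (j == 1) then 1 else 0.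
Proof. by rewrite mxE. Qed.

Lemma Yent (i j : 'I_k.+1) : Y i j = if (i : nat) == j.+1 then yc j else 0.
Proof.
rewrite mxE !y2E /= mulr1 !mulr0 add0r.
by case: ifP => // _; case: ifP => // _; case: ifP.
Qed.

Lemma mulYmx p (A : 'M[R]_(k.+1, p)) i j :
  (Y *m A) i j = if (0 < i)%N then yc i.-1 * A (inord i.-1) j else 0.
Proof.
rewrite mxE; case: ifP => [i0|i0].
  rewrite (bigD1 (inord i.-1)) //= big1 ?addr0.
    rewrite Yent inordK; last by case: i i0 => [[|i]] //= /ltnW.
    by rewrite prednK // eqxx.
  move=> l /negbTE hl; rewrite Yent; case: ifP; last by rewrite mul0r.
  move/eqP => e; move: hl; suff -> : l = inord i.-1 by rewrite eqxx.
  by apply: val_inj; rewrite /= e /= inordK // -e ltnW.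
rewrite big1 // => l _; rewrite Yent; case: ifP; last by rewrite mul0r.
by move/eqP => e; move: i0; rewrite e.
Qed.

Lemma mulmxY p (A : 'M[R]_(p, k.+1)) i j :
  (A *m Y) i j = if (j < k)%N then A i (inord j.+1) * yc j else 0.
Proof.
rewrite mxE; case: ifP => [jk|jk].
  rewrite (bigD1 (inord j.+1)) //= big1 ?addr0.
    by rewrite Yent inordK // eqxx.
  move=> l /negbTE hl; rewrite Yent; case: ifP; last by rewrite mulr0.
  move/eqP => e; move: hl; suff -> : l = inord j.+1 by rewrite eqxx.
  by apply: val_inj; rewrite /= e /= inordK.
rewrite big1 // => l _; rewrite Yent; case: ifP; last by rewrite mulr0.
move/eqP => e; have := ltn_ord l; rewrite e ltnS => h.
by move: jk; rewrite (leq_trans _ h).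
Qed.
Lemma mxBE p q (A B : 'M[R]_(p,q)) i j : (A - B) i j = A i j - B i j.
Proof. by rewrite !mxE. Qed.

Lemma sum2 (F : 'I_2 -> R) : \sum_(i < 2) F i = F 0 + F 1.
Proof. rewrite big_ord_recl big_ord1. by congr (_ + F _); apply: val_inj. Qed.

Lemma WE (X : 'M[R]_2) :
  let W := y2 R *m X - X *m y2 R in
  [/\ W 0 0 = X 1 0, W 0 1 = X 1 1 - X 0 0, W 1 0 = 0 & W 1 1 = - X 1 0].
Proof.
rewrite /= !mxBE !mxE !sum2 !y2E /=.
split; ring.
Qed.

Lemma natS n : (n.+1)%:R = n%:R + 1 :> R.
Proof. by rewrite -natr1. Qed.

Lemma commY (X : 'M[R]_2) :
  Y *m rhok k X - rhok k X *m Y = rhok k (y2 R *m X - X *m y2 R).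
Proof.
case: (WE X) => W00 W01 W10 W11.
apply/matrixP => i j; rewrite mxBE mulYmx mulmxY [in RHS]mxE W00 W01 W10 W11.
have hi := ltn_ord i; have hj := ltn_ord j.
case jk: (j < k)%N; case: (posnP i) => i0; rewrite /rhok ?mxE ?i0 /=;
  rewrite ?inordK ?prednK ?ltnS ?leq_pred ?(ltnW hi) //; try lia.
all: move: hi hj jk i0; rewrite /yc.
all: generalize (nat_of_ord i) (nat_of_ord j) => a b.
all: move=> *; repeat (case: ifP => ?); try (exfalso; lia).
all: try (rewrite ?mul0r ?mulr0 ?subrr; done).
all: try lia.
- have -> : b = 0%N by lia. rewrite !natrM subn0. ring.
- have -> : a.-1 = b.+1 by lia. ring.
- have -> : a.-1 = b by lia.
  rewrite !natrM !natrB; try lia. ring.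
- have -> : a = b by lia. destruct b as [|c]; first lia.
  rewrite /= !natrM !natrB; try lia. rewrite !natS. ring.
- have -> : b = 0%N by lia. have -> : k = 0%N by lia. rewrite subn0. ring.
- have -> : a = b by lia. have -> : b = k by lia. destruct k as [|c]; first lia.
  rewrite /= !natrM !natrB; try lia. rewrite !natS. ring.
Qed.

Lemma rhokD (X X' : 'M[R]_2) : rhok k (X + X') = rhok k X + rhok k X'.
Proof. apply/matrixP => i j; rewrite !mxE; repeat case: ifP => _; ring. Qed.

Lemma rhokZ a (X : 'M[R]_2) : rhok k (a *: X) = a *: rhok k X.
Proof. apply/matrixP => i j; rewrite !mxE; repeat case: ifP => _; ring. Qed.

Lemma rhok0 : rhok k 0 = 0 :> 'M[R]_k.+1.
Proof. by rewrite -(scale0r 0) rhokZ scale0r. Qed.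

Lemma tr_rhok (X : 'M[R]_2) : \tr X = 0 -> \tr (rhok k X) = 0.
Proof.
rewrite /mxtrace sum2 => tX.
have -> : \sum_(i < k.+1) rhok k X i i = \sum_(i < k.+1) ((k - i)%:R * X 1 1 + i%:R * X 0 0).
  apply: eq_bigr => i _; rewrite mxE; case: ifP; first lia.
  by rewrite eqxx.
rewrite big_split /= -!mulr_suml.
have -> : \sum_(i < k.+1) (k - i)%:R = \sum_(i < k.+1) (i%:R : R).
  rewrite (reindex_inj rev_ord_inj) /=; apply: eq_bigr => i _.
  congr (_%:R); have := ltn_ord i; rewrite /=; lia.
rewrite -mulrDr addrC tX mulr0 //.
Qed.

Definition w (p : nat) : R := \prod_(t < p) yc t.

Lemma w_neq0 p : (p <= k)%N -> w p != 0.
Proof.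
move=> hp; rewrite /w; apply/prodf_neq0 => t _.
rewrite /yc pnatr_eq0; have ht := ltn_ord t; apply/negP => /eqP; nia.
Qed.

Lemma mulY_e (p : nat) : (p < k)%N ->
  Y *m delta_mx (inord p) 0 = yc p *: (delta_mx (inord p.+1) 0 : 'cV[R]_k.+1).
Proof.
move=> hp; apply/matrixP => i j; rewrite mulYmx !mxE.
rewrite [j]ord1 eqxx !andbT -!val_eqE /= !inordK; try lia.
case: (posnP i) => i0.
  by rewrite i0 /= mulr0.
have E : (i.-1 == p) = ((i:nat) == p.+1) by apply/eqP/eqP; lia.
rewrite E; case: eqP => [e|_]; [by rewrite e | by rewrite !mulr0].
have := ltn_ord i; lia.
Qed.

Lemma Ypow_e0 (p : nat) : (p <= k)%N ->
  Y ^+ p *m delta_mx 0 0 = w p *: (delta_mx (inord p) 0 : 'cV[R]_k.+1).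
Proof.
elim: p => [|p IH] hp.
  rewrite expr0 mul1mx /w big_ord0 scale1r; congr delta_mx; apply: val_inj.
  by rewrite /= inordK.
rewrite exprS -mulmxE -mulmxA IH; last lia.
rewrite -scalemxAr mulY_e; last lia.
by rewrite scalerA /w big_ord_recr /=.
Qed.

Lemma colEq (M N : 'M[R]_k.+1) :
  (forall q : 'I_k.+1, M *m (delta_mx q 0 : 'cV[R]_k.+1) = N *m delta_mx q 0) -> M = N.
Proof.
move=> H; apply/matrixP => i q; have := H q; rewrite -!colE => /matrixP/(_ i 0).
by rewrite !mxE.
Qed.

Lemma YpowC p q : Y ^+ p *m Y ^+ q = Y ^+ q *m Y ^+ p.
Proof. by rewrite mulmxE -!exprD addnC. Qed.

Lemma e_q (q : 'I_k.+1) :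
  delta_mx q 0 = (w q)^-1 *: (Y ^+ q *m delta_mx 0 0 : 'cV[R]_k.+1).
Proof.
by rewrite (Ypow_e0 (ltn_ord q)) scalerA mulVf ?(w_neq0 (ltn_ord q)) // scale1r inord_val.
Qed.

Lemma centY (M : 'M[R]_k.+1) : Y *m M = M *m Y ->
  M = \sum_(p < k.+1) (M p 0 / w p) *: Y ^+ p.
Proof.
move=> cMY; set N := \sum_(p < k.+1) _.
have cM : forall q, M *m Y ^+ q = Y ^+ q *m M.
  elim => [|q IH]; first by rewrite expr0 mul1mx mulmx1.
  by rewrite exprS -mulmxE mulmxA -cMY -mulmxA IH mulmxA.
have cN : forall q, N *m Y ^+ q = Y ^+ q *m N.
  move=> q; rewrite mulmx_suml mulmx_sumr; apply: eq_bigr => p _.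
  by rewrite -scalemxAl -scalemxAr YpowC.
have h0 : M *m (delta_mx 0 0 : 'cV[R]_k.+1) = N *m delta_mx 0 0.
  rewrite mulmx_suml.
  under eq_bigr => p _ do rewrite -scalemxAl (Ypow_e0 (ltn_ord p)) scalerA inord_val
     (mulfVK (w_neq0 (ltn_ord p))).
  apply/matrixP => i j; rewrite -colE summxE !mxE [j]ord1.
  rewrite (bigD1 i) //= big1 ?addr0; first by rewrite !mxE !eqxx mulr1.
  by move=> p /negbTE np; rewrite !mxE eq_sym np mulr0.
apply: colEq => q; rewrite e_q -!scalemxAr !mulmxA cM cN -!mulmxA h0 //.
Qed.
End S1.



Section S2.
Variable R : realType.
Variable k : nat.
Local Notation Y := (rhok k (y2 R)).
Local Notation yc := (@yc R k).
Local Notation w := (@w R k).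

Lemma ord2E (i : 'I_2) : i = 0 \/ i = 1.
Proof.
case: i => [[|[|i]] hi]; [left|right|]; try (apply: val_inj; reflexivity).
by [].
Qed.

Lemma mx2P (A B : 'M[R]_2) : A 0 0 = B 0 0 -> A 0 1 = B 0 1 ->
  A 1 0 = B 1 0 -> A 1 1 = B 1 1 -> A = B.
Proof.
move=> h00 h01 h10 h11; apply/matrixP => i j.
by case: (ord2E i) => ->; case: (ord2E j) => ->.
Qed.
Definition Zof (X : 'M[R]_2) : 'M[R]_2 := X 0 0 *: x2 R + (X 0 1 / 2) *: h2 R.

Lemma commZ (X : 'M[R]_2) : \tr X = 0 -> X 1 0 = 0 ->
  y2 R *m Zof X - Zof X *m y2 R = X.
Proof.
rewrite /mxtrace sum2 => tX x10.
apply: mx2P; rewrite !mxBE !mxE !sum2 !mxE /= ?x10; lra.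
Qed.

Lemma tr_Zof (X : 'M[R]_2) : \tr (Zof X) = 0.
Proof. rewrite /mxtrace sum2 !mxE /=; ring. Qed.

Lemma trC n (A B : 'M[R]_n) : \tr (A *m B - B *m A) = 0.
Proof. by rewrite raddfB /= mxtrace_mulC subrr. Qed.

Lemma trY : \tr Y = 0.
Proof. by apply: big1 => a _; rewrite Yent; case: eqP => // e; lia. Qed.

Lemma sumyc_gt0 : (0 < k)%N -> 0 < \sum_(a < k.+1) (if (a < k)%N then yc a else 0).
Proof.
move=> k0; rewrite (bigD1 ord0) //= k0.
apply: (@lt_le_trans _ _ (yc 0)).
  by rewrite /yc ltr0n muln1 subn0.
rewrite lerDl; apply: sumr_ge0 => a _; case: ifP => // _; exact: ler0n.
Qed.

Lemma X10_zero (M : 'M[R]_k.+1) b (X : 'M[R]_2) : (0 < k)%N ->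
  Y *m M - M *m Y = rhok k X + b *: 1%:M -> X 1 0 = 0.
Proof.
move=> k0 H.
have : \tr ((Y *m M - M *m Y) *m Y) = 0.
  by rewrite mulmxBl raddfB /= -!mulmxA (mxtrace_mulC Y) -mulmxA subrr.
rewrite H mulmxDl mxtraceD -scalemxAl mul1mx mxtraceZ trY mulr0 addr0.
have -> : \tr (rhok k X *m Y) = X 1 0 * \sum_(a < k.+1) (if (a < k)%N then yc a else 0).
  rewrite mulr_sumr; apply: eq_bigr => a _; rewrite mulmxY.
  case: ifP => ak; last by rewrite mulr0.
  rewrite mxE inordK // !eqxx.
  case: ifP => [/eqP|_]; first lia.
  by case: ifP => [/eqP|_]; first lia.
move/eqP; rewrite mulf_eq0 => /orP [/eqP //|].
by rewrite gt_eqF // sumyc_gt0.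
Qed.

Lemma sub4 (V : zmodType) (a b c d : V) : (a - c) - (b - d) = (a - b) - (c - d).
Proof. by rewrite !opprB !addrA addrAC (addrAC a) addrAC. Qed.

Lemma keyV (M : 'M[R]_k.+1) s b (X : 'M[R]_2) : \tr X = 0 -> X 1 0 = 0 ->
  Y *m M - M *m Y = s *: rhok k X + b *: 1%:M ->
  M = s *: rhok k (Zof X) +
      \sum_(p < k.+1) ((M - s *: rhok k (Zof X)) p 0 / w p) *: Y ^+ p.
Proof.
move=> tX x10 H.
have b0 : b = 0.
  have := trC Y M; rewrite H mxtraceD mxtraceZ tr_rhok // mulr0 add0r.
  rewrite scalemx1 mxtrace_scalar => /eqP; rewrite mulrn_eq0 /= => /eqP //.
move: H; rewrite b0 scale0r addr0 => H.
set M' := M - _.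
have HC : M' = \sum_(p < k.+1) (M' p 0 / w p) *: Y ^+ p.
  apply: centY; apply/eqP; rewrite -subr_eq0; apply/eqP.
  rewrite /M' mulmxBr mulmxBl -scalemxAr -scalemxAl sub4 H -scalerBr commY commZ //.
  by rewrite subrr.
by rewrite -HC /M' addrC subrK.
Qed.

End S2.



Section S3.
Variable R : realType.
Variables k m : nat.
Local Notation n := k.+1.

Definition slice (c d : 'I_m) (T : 'M[R]_(n * m)) : 'M[R]_n :=
  \matrix_(a, b) T (mxtens_index (a, c)) (mxtens_index (b, d)).

Lemma sliceT c d (A : 'M[R]_n) (B : 'M[R]_m) : slice c d (A *t B) = B c d *: A.
Proof. by apply/matrixP => a b; rewrite mxE tensmxE mxE mulrC. Qed.

Lemma sliceD c d (S T : 'M[R]_(n * m)) : slice c d (S + T) = slice c d S + slice c d T.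
Proof. by apply/matrixP => a b; rewrite !mxE. Qed.

Lemma sliceB c d (S T : 'M[R]_(n * m)) : slice c d (S - T) = slice c d S - slice c d T.
Proof. by apply/matrixP => a b; rewrite !mxE. Qed.

Lemma sliceZ c d x (T : 'M[R]_(n * m)) : slice c d (x *: T) = x *: slice c d T.
Proof. by apply/matrixP => a b; rewrite !mxE. Qed.

Lemma slice_sum c d I (r : seq I) (P : pred I) (F : I -> 'M[R]_(n * m)) :
  slice c d (\sum_(i <- r | P i) F i) = \sum_(i <- r | P i) slice c d (F i).
Proof.
apply/matrixP => a b; rewrite !mxE !summxE; apply: eq_bigr => i _; by rewrite mxE.
Qed.

Lemma slice_inj (S T : 'M[R]_(n * m)) : (forall c d, slice c d S = slice c d T) -> S = T.
Proof.
move=> H; apply/matrixP => i j.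
case: (mxtens_indexP i) => a c; case: (mxtens_indexP j) => b d.
by have := H c d => /matrixP/(_ a b); rewrite !mxE.
Qed.

Lemma sum_tens (F : 'I_(n * m) -> R) :
  \sum_(l < n * m) F l = \sum_(a < n) \sum_(c < m) F (mxtens_index (a, c)).
Proof.
rewrite pair_big /= (reindex (@mxtens_index n m)) /=.
  by apply: eq_bigr => -[a c].
by exists (@mxtens_unindex n m) => x _; rewrite (mxtens_indexK, mxtens_unindexK).
Qed.

Lemma slice_mull c d (A : 'M[R]_n) (T : 'M[R]_(n * m)) :
  slice c d ((A *t (1%:M : 'M[R]_m)) *m T) = A *m slice c d T.
Proof.
apply/matrixP => a b; rewrite !mxE sum_tens; apply: eq_bigr => a' _.
rewrite (bigD1 c) //= big1 ?addr0.
  by rewrite tensmxE !mxE eqxx mulr1.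
by move=> c' /negbTE nc; rewrite tensmxE !mxE eq_sym nc mulr0 mul0r.
Qed.

Lemma slice_mulr c d (A : 'M[R]_n) (T : 'M[R]_(n * m)) :
  slice c d (T *m (A *t (1%:M : 'M[R]_m))) = slice c d T *m A.
Proof.
apply/matrixP => a b; rewrite !mxE sum_tens; apply: eq_bigr => a' _.
rewrite (bigD1 d) //= big1 ?addr0.
  by rewrite tensmxE !mxE eqxx mulr1.
by move=> d' /negbTE nd; rewrite tensmxE !mxE nd mulr0 mulr0.
Qed.

Lemma tensDl p q r s (A A' : 'M[R]_(p, q)) (B : 'M[R]_(r, s)) :
  (A + A') *t B = A *t B + A' *t B.
Proof. by apply/matrixP => i j; rewrite !mxE mulrDl. Qed.
Lemma tensDr p q r s (A : 'M[R]_(p, q)) (B B' : 'M[R]_(r, s)) :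
  A *t (B + B') = A *t B + A *t B'.
Proof. by apply/matrixP => i j; rewrite !mxE mulrDr. Qed.
Lemma tensBl p q r s (A A' : 'M[R]_(p, q)) (B : 'M[R]_(r, s)) :
  (A - A') *t B = A *t B - A' *t B.
Proof. by apply/matrixP => i j; rewrite !mxE mulrBl. Qed.
Lemma tensBr p q r s (A : 'M[R]_(p, q)) (B B' : 'M[R]_(r, s)) :
  A *t (B - B') = A *t B - A *t B'.
Proof. by apply/matrixP => i j; rewrite !mxE mulrBr. Qed.
Lemma tensZl p q r s x (A : 'M[R]_(p, q)) (B : 'M[R]_(r, s)) :
  (x *: A) *t B = x *: (A *t B).
Proof. by apply/matrixP => i j; rewrite !mxE mulrA. Qed.
Lemma tensZr p q r s x (A : 'M[R]_(p, q)) (B : 'M[R]_(r, s)) :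
  A *t (x *: B) = x *: (A *t B).
Proof. by apply/matrixP => i j; rewrite !mxE mulrCA. Qed.
End S3.



Section S4.
Variable R : realType.
Variables k m : nat.
Local Notation n := k.+1.
Local Notation Y := (rhok k (y2 R)).

Lemma part1 (j : nat) (T : glV R k m) (B : 'M[R]_m) :
  in_A j T -> in_A j (brV ((1%:M : 'M[R]_k.+1) *t B) T).
Proof.
case => [[-> [C [tC ->]]] | [hj [C ->]]].
  left; split => //; exists (B *m C - C *m B); split; first exact: trC.
  by rewrite /brV !tensmx_mul !mul1mx !mulmx1 tensBr.
right; split => //; exists (B *m C - C *m B).
by rewrite /brV !tensmx_mul !mul1mx !mulmx1 tensBr.
Qed.

Lemma in_A_form (j : nat) (T : glV R k m) : (2 <= j)%N -> in_A j T ->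
  exists C : 'M[R]_m, T = Y ^+ j.-1 *t C /\ (j = 2%N -> \tr C = 0).
Proof.
move=> hj [[-> [C [tC ->]]] | [hj' [C ->]]].
  by exists C; rewrite expr1.
by exists C; split => // e; move: hj'; rewrite e.
Qed.

Lemma mulY_ek : Y *m (delta_mx (inord k) 0 : 'cV[R]_k.+1) = 0.
Proof.
apply/matrixP => i j; rewrite mulYmx !mxE.
case: ifP => // i0; rewrite -val_eqE /= !inordK; try lia.
  rewrite (_ : (i.-1 == k) = false) ?mulr0 //; apply/negbTE/eqP; have := ltn_ord i; lia.
have := ltn_ord i; lia.
Qed.

Lemma Ypow_vk (p l : nat) : (l <= k)%N ->
  Y ^+ p *m (delta_mx (inord l) 0 : 'cV[R]_k.+1) = 0 \/
  ((l + p <= k)%N /\ exists c, Y ^+ p *m (delta_mx (inord l) 0 : 'cV[R]_k.+1) =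
      c *: delta_mx (inord (l + p)) 0).
Proof.
move=> hl; elim: p => [|p IH].
  by right; split; [rewrite addn0 | exists 1; rewrite expr0 mul1mx scale1r addn0].
rewrite exprS -mulmxE -mulmxA.
case: IH => [->|[hp [c ->]]]; first by left; rewrite mulmx0.
rewrite -scalemxAr.
have [hlt|hge] := ltnP (l + p) k.
  right; split; first by rewrite addnS.
  by exists (c * yc R k (l + p)); rewrite mulY_e // scalerA addnS.
have -> : (l + p)%N = k by lia.
by left; rewrite mulY_ek scaler0.
Qed.

Definition Vdeg (nn : int) (v : vecV R k m) : Prop :=
  v = 0 \/ exists l : 'I_k.+1, (l%:Z - (k.+1)%:Z = nn) /\ in_vW l v.

Lemma Vdeg0 nn : Vdeg nn 0.
Proof. by left. Qed.

Lemma VdegD nn v v' : Vdeg nn v -> Vdeg nn v' -> Vdeg nn (v + v').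
Proof.
case => [->|[l [hl [x ->]]]]; first by rewrite add0r.
case => [->|[l' [hl' [x' ->]]]]; first by rewrite addr0; right; exists l; split => //; exists x.
have e : l' = l by apply: val_inj => /=; lia.
right; exists l; split => //; exists (x + x'); by rewrite e tensDr.
Qed.

Lemma VdegZ nn a v : Vdeg nn v -> Vdeg nn (a *: v).
Proof.
case => [->|[l [hl [x ->]]]]; first by rewrite scaler0; left.
by right; exists l; split => //; exists (a *: x); rewrite tensZr.
Qed.

Lemma Vdeg_phi p (C : 'M[R]_m) nn v : Vdeg nn v ->
  Vdeg (nn + p%:Z) ((Y ^+ p *t C) *m v).
Proof.
case => [->|[l [hl [x ->]]]]; first by rewrite mulmx0; left.
rewrite (tensmx_mul (Y ^+ p) C (vk R l) x) /vk.
have hlk : (l <= k)%N by have := ltn_ord l; lia.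
have := Ypow_vk p hlk; rewrite inord_val.
case => [->|[hp [c ->]]]; first by left; rewrite tens0mx.
right; exists (inord (l + p)); split.
  by rewrite inordK; lia.
by exists (c *: (C *m x)); rewrite tensZl tensZr.
Qed.

Lemma in_g_emb nn (u : gminus R k m) : in_g nn (emb_minus u) ->
  (u.1 = 0 \/ nn = -1) /\ Vdeg nn u.2.
Proof.
case: u => t v; rewrite /in_g /emb_minus /=.
have x2E : forall s M, t *: x2 R = s *: M -> M 1 0 = 0 -> t = 0.
  by move=> s M /matrixP/(_ 1 0); rewrite !mxE /= mulr1 => -> ->; rewrite mulr0.
case: ifP => [_ [[s e] [_ ->]]|_].
  by split; [left; apply: (x2E s (y2 R)) => //; rewrite mxE | left].
case: ifP => [_ [[s e] ->]|_].
  by split; [left; apply: (x2E s (h2 R)) => //; rewrite mxE | left].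
case: ifP => [/eqP -> [_ [_ hv]]|_].
  split; first by right.
  by right; exists ord_max; split => //=; lia.
have x2z : t *: x2 R = 0 -> t = 0.
  by move=> e; apply: (x2E 0 0); rewrite ?scale0r ?mxE.
case: ifP => [_ [/x2z -> [_ [l [hl hv]]]]|_ [/x2z -> [_ ->]]].
  by split; [left | right; exists l].
by split; left.
Qed.

Lemma Vdeg_in_g nn v : Vdeg nn v -> in_g nn ((0, 0, v) : gelt R k m).
Proof.
have zx : forall M : 'M[R]_2, exists s : R, (0 : 'M[R]_2) = s *: M.
  by move=> M; exists 0; rewrite scale0r.
case => [->|[l [hl hv]]].
  rewrite /in_g; case: ifP => _; first by split; [apply: zx | split].
  case: ifP => _; first by split; [apply: zx|].
  case: ifP => _; first by split; [apply: zx | split => //; exists 0; rewrite tensmx0].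
  case: ifP => [/andP [h1 h2]|_]; last by [].
  split => //; split => //.
  exists (inord (absz (nn + (k.+1)%:Z))); split; last by exists 0; rewrite tensmx0.
  rewrite inordK; lia.
have hlk := ltn_ord l; rewrite /in_g; case: ifP => [/eqP e|_]; first by exfalso; lia.
case: ifP => [/eqP e|_]; first by exfalso; lia.
case: ifP => [/eqP e|/eqP ne1].
  split; first by apply: zx.
  split => //; rewrite (_ : ord_max = l) //; apply: val_inj => /=; lia.
case: ifP => [_|/negP H]; first by split => //; split => //; exists l.
exfalso; apply: H; apply/andP; split; lia.
Qed.

End S4.



Section S5.
Variable R : realType.
Variables k m : nat.
Local Notation n := k.+1.
Local Notation Y := (rhok k (y2 R)).

Lemma part4 (j : nat) (phi : glV R k m) : (2 <= j)%N -> in_A j phi ->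
  cochain_degree (c_phi phi) j%:Z.
Proof.
move=> hj /(in_A_form hj) [C [-> _]].
move=> i j' u w0 hu hw.
have [hu1 hu2] := in_g_emb hu; have [hw1 hw2] := in_g_emb hw.
rewrite /c_phi; apply: Vdeg_in_g.
apply: VdegD.
  case: hu1 => [->|ei]; first by rewrite scale0r; apply: Vdeg0.
  apply: VdegZ; have -> : i + j' + j%:Z = j' + (j.-1)%:Z by lia.
  exact: Vdeg_phi.
rewrite -scaleNr; case: hw1 => [->|ej]; first by rewrite oppr0 scale0r; apply: Vdeg0.
apply: VdegZ; have -> : i + j' + j%:Z = i + (j.-1)%:Z by lia.
exact: Vdeg_phi.
Qed.

Lemma Ypow_entry (p q : nat) : (p <= k)%N -> (q <= k)%N ->
  (Y ^+ q) (inord p) 0 = if p == q then w R k q else 0.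
Proof.
move=> hp hq; have := Ypow_e0 R hq => /matrixP/(_ (inord p) 0).
rewrite -colE !mxE -val_eqE /= !inordK; try lia.
by rewrite eqxx andbT; case: eqP; rewrite ?mulr1 ?mulr0.
Qed.

Lemma part3 (hk : (0 < k)%N) (hm : (0 < m)%N) (phi : nat -> glV R k m) :
  (forall j, (2 <= j <= k.+1)%N -> in_A j (phi j)) ->
  in_a (\sum_(2 <= j < k.+2) phi j) ->
  forall j, (2 <= j <= k.+1)%N -> phi j = 0.
Proof.
move=> hA [X [B [tX hS]]] j0 hj0.
have hj02 : (2 <= j0)%N by case/andP: hj0.
have [C [e0 t0]] := in_A_form hj02 (hA j0 hj0).
suff C0 : C = 0 by rewrite e0 C0 tensmx0.
have hp : (j0.-1 <= k)%N by case/andP: hj0 => ? ?; lia.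
have key : forall c d, C c d * w R k j0.-1 =
    (1%:M : 'M[R]_m) c d * rhok k X (inord j0.-1) 0 +
    B c d * (1%:M : 'M[R]_k.+1) (inord j0.-1) 0.
  move=> c d; have := congr1 (fun T => slice c d T (inord j0.-1) 0) hS => /=.
  rewrite sliceD !sliceT [in X in _ = X -> _]mxE [(_ *: rhok _ _) _ _]mxE [(_ *: 1%:M) _ _]mxE.
  move <-.
  rewrite slice_sum summxE (bigD1_seq j0) /= ?mem_index_iota ?iota_uniq // //.
  rewrite big1_seq ?addr0.
    by rewrite e0 sliceT mxE Ypow_entry // eqxx.
  move=> j /andP [nj jin]; rewrite mem_index_iota in jin.
  have hjr : (2 <= j <= k.+1)%N by lia.
  have hj2 : (2 <= j)%N by lia.
  have [Cj [ej _]] := in_A_form hj2 (hA j hjr).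
  rewrite ej sliceT mxE Ypow_entry //; last by lia.
  by rewrite (_ : (j0.-1 == j.-1) = false) ?mulr0 //; apply/negbTE/eqP; lia.
have hw := w_neq0 R hp.
have [e1|ne1] := eqVneq j0 2%N.
  have CE : C = X 0 1 *: 1%:M.
    apply/matrixP => c d; have := key c d.
    rewrite e1 /= [rhok _ _ _ _]mxE /= !mxE inordK // /= /w big_ord1 /yc subn0 muln1.
    rewrite (_ : (inord 1 == 0 :> 'I_k.+1) = false); last by rewrite -val_eqE /= inordK.
    rewrite mulr0 addr0 => /(congr1 (fun x => x / k%:R)).
    rewrite mulfK ?pnatr_eq0 -?lt0n // => ->.
    have kn0 : k%:R != 0 :> R by rewrite pnatr_eq0 -lt0n.
    field; exact: kn0.
  have := t0 e1; rewrite CE mxtraceZ mxtrace1 => /eqP; rewrite mulf_eq0 pnatr_eq0 (_ : (m == 0%N) = false) ?orbF; last by lia.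
  by move/eqP => ->; rewrite scale0r.
apply/matrixP => c d; have := key c d.
rewrite [rhok _ _ _ _]mxE /= !mxE !inordK //.
rewrite (_ : (j0.-1 == 1%N) = false); last by apply/negbTE/eqP; lia.
rewrite (_ : (j0.-1 == 0%N) = false); last by apply/negbTE/eqP; lia.
rewrite (_ : (inord j0.-1 == 0 :> 'I_k.+1) = false); last by rewrite -val_eqE /= inordK //; lia.
rewrite mulr0 mulr0 addr0 => /eqP; rewrite mulf_eq0 (negbTE hw) orbF => /eqP ->.
by [].
Qed.

End S5.



Section S6.
Variable R : realType.
Variables k m : nat.
Local Notation n := k.+1.
Local Notation Y := (rhok k (y2 R)).

Lemma part2b (T : glV R k m) a0 (phi : nat -> glV R k m) : in_a a0 ->
  (forall j, (2 <= j <= k.+1)%N -> in_A j (phi j)) ->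
  T = a0 + \sum_(2 <= j < k.+2) phi j -> y_invariant_mod_a T.
Proof.
move=> [X [B [tX ->]]] hA ->.
rewrite /y_invariant_mod_a /brV /yV.
have hs : (Y *t (1%:M : 'M[R]_m)) *m (\sum_(2 <= j < k.+2) phi j) =
          (\sum_(2 <= j < k.+2) phi j) *m (Y *t (1%:M : 'M[R]_m)).
  rewrite mulmx_sumr mulmx_suml; apply: eq_big_nat => j hj.
  have hj2 : (2 <= j)%N by lia.
  have hj' : (2 <= j <= k.+1)%N by lia.
  have [C [-> _]] := in_A_form hj2 (hA j hj').
  by rewrite !tensmx_mul mul1mx mulmx1 mulmxE -exprS -exprSr.
exists (y2 R *m X - X *m y2 R), 0; split; first exact: trC.
rewrite !mulmxDr !mulmxDl hs !tensmx_mul !mul1mx !mulmx1 -commY tensmx0 addr0 tensBl.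
by rewrite opprD addrACA subrr addr0 opprD addrACA subrr addr0.
Qed.

Lemma shift_sum (V : zmodType) (G : nat -> V) :
  \sum_(p < k.+1) G p = G 0%N + \sum_(2 <= j < k.+2) G j.-1.
Proof.
rewrite big_ord_recl /= (big_addn 0 k.+2 2) subSS ?subn0 subn1 /= big_mkord.
by congr (_ + _); apply: eq_bigr => i _; rewrite addn2 /bump.
Qed.


Lemma tr_y2 : \tr (y2 R) = 0.
Proof. by rewrite /mxtrace sum2 !mxE /= addr0. Qed.

Lemma part2a (hk : (0 < k)%N) (hm : (0 < m)%N) (T : glV R k m) :
  y_invariant_mod_a T ->
  exists (a0 : glV R k m) (phi : nat -> glV R k m),
    in_a a0 /\ (forall j, (2 <= j <= k.+1)%N -> in_A j (phi j)) /\
    T = a0 + \sum_(2 <= j < k.+2) phi j.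
Proof.
move=> [X [B [tX H]]].
pose c0 : 'I_m := Ordinal hm.
have hsl : forall c d, Y *m slice c d T - slice c d T *m Y =
    (1%:M : 'M[R]_m) c d *: rhok k X + B c d *: 1%:M.
  move=> c d; have := congr1 (slice c d) H.
  by rewrite /brV /yV sliceB slice_mull slice_mulr sliceD !sliceT.
have x10 : X 1 0 = 0.
  apply: (X10_zero (M := slice c0 c0 T) (b := B c0 c0) hk).
  by rewrite hsl mxE eqxx scale1r.
pose Z := Zof X.
pose C (p : nat) : 'M[R]_m := \matrix_(c, d)
  ((slice c d T - (1%:M : 'M[R]_m) c d *: rhok k Z) (inord p) 0 / w R k p).
have hT : T = rhok k Z *t 1%:M + \sum_(p < k.+1) Y ^+ p *t C p.
  apply: slice_inj => c d; rewrite sliceD sliceT slice_sum {1}(keyV tX x10 (hsl c d)).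
  congr (_ + _); apply: eq_bigr => p _; rewrite sliceT; congr (_ *: _); by rewrite [RHS]mxE inord_val.
pose t := \tr (C 1%N) / m%:R.
pose C' (p : nat) := if p == 1%N then C 1%N - t%:M else C p.
exists (rhok k (Z + t *: y2 R) *t 1%:M + 1%:M *t C 0%N).
exists (fun j => Y ^+ j.-1 *t C' j.-1).
split.
  exists (Z + t *: y2 R), (C 0%N); split => //.
  by rewrite /is_sl2 mxtraceD mxtraceZ tr_Zof tr_y2 mulr0 addr0.
split.
  move=> j hj; have [e2|ne2] := eqVneq j 2%N.
    left; split => //; exists (C 1%N - t%:M); split.
      have mn0 : m%:R != 0 :> R by rewrite pnatr_eq0 -lt0n.
      by rewrite raddfB /= mxtrace_scalar /t -[(_ / _) *+ _]mulr_natr (mulfVK mn0) subrr.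
    by rewrite e2 /C' /= expr1.
  right; split; first by lia.
  exists (C j.-1); rewrite /C' (_ : (j.-1 == 1%N) = false) //.
  by apply/negbTE/eqP; lia.
rewrite {1}hT.
have e1 : \sum_(p < k.+1) Y ^+ p *t C p =
          Y *t t%:M + \sum_(p < k.+1) Y ^+ p *t C' p.
  have i1 : (1 < k.+1)%N by lia.
  rewrite (bigD1 (Ordinal i1)) // [in RHS](bigD1 (Ordinal i1)) //= addrA.
  congr (_ + _).
    by rewrite /C' /= expr1 tensBr addrC subrK.
  apply: eq_bigr => p hp; rewrite /C' (_ : ((p : nat) == 1%N) = false) //.
  by apply/negbTE; move: hp; apply: contra => /eqP e; apply/eqP/val_inj.
rewrite e1 (shift_sum (fun p => Y ^+ p *t C' p)) rhokD rhokZ tensDl tensZl -tensZr scalemx1.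
rewrite /C' /= expr0.
by rewrite !addrA.
Qed.

End S6.

Unset Implicit Arguments. Set Strict Implicit.
Theorem theorem2 (R : realType) (k m : nat) (hk : (3 <= k)%N) (hm : (2 <= m)%N) :
  (* each A_j is a gl(m,R)-submodule of gl(V) (adjoint action of 1 (x) B) *)
  (forall (j : nat) (T : glV R k m) (B : 'M[R]_m),
      (2 <= j <= k.+1)%N -> in_A j T ->
      in_A j (brV ((1%:M : 'M[R]_k.+1) *t B) T)) /\
  (* the y-invariants of gl(V)/a are the sum of the images of the A_j *)
  (forall T : glV R k m,
      y_invariant_mod_a T <->
      exists (a0 : glV R k m) (phi : nat -> glV R k m),
        in_a a0 /\ (forall j, (2 <= j <= k.+1)%N -> in_A j (phi j)) /\
        T = a0 + \sum_(2 <= j < k.+2) phi j) /\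
  (* ... and this sum of images is direct *)
  (forall phi : nat -> glV R k m,
      (forall j, (2 <= j <= k.+1)%N -> in_A j (phi j)) ->
      in_a (\sum_(2 <= j < k.+2) phi j) ->
      forall j, (2 <= j <= k.+1)%N -> in_a (phi j)) /\
  (* for phi in A_j, the cochain c_phi has degree j *)
  (forall (j : nat) (phi : glV R k m),
      (2 <= j <= k.+1)%N -> in_A j phi -> cochain_degree (c_phi phi) j%:Z).
Proof.
have hk0 : (0 < k)%N by lia.
have hm0 : (0 < m)%N by lia.
split; first by move=> j T B _ hA; exact: part1.
split.
  move=> T; split; first exact: part2a.
  by move=> [a0 [phi [ha [hA ->]]]]; exact: (part2b ha hA erefl).
split.
  move=> phi hA hS j hj; rewrite (part3 hk0 hm0 hA hS hj).
  exists 0, 0; split; first by rewrite /is_sl2 mxtrace0.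
  by rewrite rhok0 tens0mx tensmx0 addr0.
move=> j phi hj hA; apply: part4 hA; by case/andP: hj.
Qed.
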